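(* Let $k$ be an algebraically closed field of characteristic zero. Let $Y=\operatorname{Spec} B$ and $T=\operatorname{Spec} R$ be irreducible affine varieties over $k$, let $f : Y\to T$ be a dominant morphism whose general fibers are irreducible and reduced, regard $R\subset B$ via $f^*$, and let $D$ be an $R$-trivial derivation of $B$ such that for each closed point $t\in T$ with maximal ideal $\mathfrak m$, the induced derivation $D\otimes_R R/\mathfrak m$ of $B\otimes_R R/\mathfrak m$ is locally nilpotent. Then there exist a subfield $k_0\subset k$ which is a finitely generated field extension of $\mathbb Q$, geometrically integral affine $k_0$-varieties $Y_0=\operatorname{Spec} B_0$ and $T_0=\operatorname{Spec} R_0$, a dominant morphism $f_0 : Y_0\to T_0$ and an $R_0$-trivial derivation $D_0$ of $B_0$ such that: (1) $Y_0,T_0,f_0,D_0$ are defined over $k_0$; (2) $Y=Y_0\otimes_{k_0}k$, $T=T_0\otimes_{k_0}k$, $f=f_0\otimes_{k_0}k$ and $D=D_0\otimes_{k_0}k$; (3) $D_0$ is locally nilpotent if and only if $D$ is locally nilpotent.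
   Context: A derivation $\delta$ of a ring $A$ is locally nilpotent if for every $a\in A$ some power $\delta^n(a)=0$. An $R$-trivial derivation of $B$ is a derivation vanishing on $R$. *)

(* Defs.v *)
From HB Require Import structures.
From mathcomp Require Import all_boot all_order all_algebra.
Set Implicit Arguments. Unset Strict Implicit. Unset Printing Implicit Defensive.
Import GRing.Theory.
Local Open Scope ring_scope.

Definition is_subfield (k : fieldType) (F : k -> Prop) : Prop :=
  [/\ F 0, F 1,
      (forall x y, F x -> F y -> F (x - y)),
      (forall x y, F x -> F y -> F (x * y)) &
      (forall x, F x -> F x^-1)].

Definition fg_field_over_Q (k : fieldType) (F : k -> Prop) : Prop :=
  is_subfield F /\
  exists s : seq k, {in s, forall x, F x} /\
    forall G : k -> Prop, is_subfield G -> {in s, forall x, G x} ->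
      forall x, F x -> G x.

Section Alg.
Variables (k : fieldType) (B : comAlgType k).

Definition is_subalg_over (F : k -> Prop) (A : B -> Prop) : Prop :=
  [/\ (forall c, F c -> A (c%:A)),
      (forall x y, A x -> A y -> A (x + y)) &
      (forall x y, A x -> A y -> A (x * y))].

Definition fg_subalg_over (F : k -> Prop) (A : B -> Prop) : Prop :=
  is_subalg_over F A /\
  exists gens : seq B, {in gens, forall x, A x} /\
    forall C : B -> Prop, is_subalg_over F C -> {in gens, forall x, C x} ->
      forall x, A x -> C x.

Definition is_domain : Prop :=
  (1 : B) != 0 /\ forall a b : B, a * b = 0 -> a = 0 \/ b = 0.

Definition is_ideal_of (R I : B -> Prop) : Prop :=
  [/\ (forall x, I x -> R x), I 0,
      (forall x y, I x -> I y -> I (x + y)) &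
      (forall r x, R r -> I x -> I (r * x))].

Definition is_max_ideal_of (R m : B -> Prop) : Prop :=
  [/\ is_ideal_of R m, ~ m 1 &
      forall I, is_ideal_of R I -> (forall x, m x -> I x) -> ~ I 1 ->
        forall x, I x -> m x].

Definition ext_ideal (m : B -> Prop) (b : B) : Prop :=
  exists (ms bs : seq B), size ms = size bs /\ {in ms, forall x, m x} /\
    b = \sum_(i < size ms) ms`_i * bs`_i.

Definition is_prime_ideal (P : B -> Prop) : Prop :=
  [/\ P 0, (forall x y, P x -> P y -> P (x + y)),
      (forall r x, P x -> P (r * x)), ~ P 1 &
      (forall x y, P (x * y) -> P x \/ P y)].

Definition is_derivation (D : B -> B) : Prop :=
  forall a b, D (a + b) = D a + D b /\ D (a * b) = a * D b + D a * b.

Definition loc_nilp_on (A : B -> Prop) (D : B -> B) : Prop :=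
  forall a, A a -> exists n, iter n D a = 0.

(* D (x) R/m is locally nilpotent on B (x)_R R/m = B / mB *)
Definition loc_nilp_mod (m : B -> Prop) (D : B -> B) : Prop :=
  forall b, exists n, ext_ideal m (iter n D b).

Definition lin_indep_over (F : k -> Prop) (s : seq B) : Prop :=
  forall c : seq k, size c = size s -> {in c, forall x, F x} ->
    \sum_(i < size s) c`_i *: s`_i = 0 -> forall i, c`_i = 0.

Definition in_kspan (A0 : B -> Prop) (b : B) : Prop :=
  exists (c : seq k) (s : seq B), size c = size s /\ {in s, forall x, A0 x} /\
    b = \sum_(i < size s) c`_i *: s`_i.

(* A0 (an F-subspace of A) is an F-form of the k-subspace A, i.e. the natural
   map A0 (x)_F k -> A is an isomorphism: injective (F-independent families in
   A0 stay k-independent) and surjective (A0 spans A over k). *)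
Definition is_form_of (F : k -> Prop) (A0 A : B -> Prop) : Prop :=
  [/\ (forall x, A0 x -> A x),
      (forall s : seq B, {in s, forall x, A0 x} ->
         lin_indep_over F s -> lin_indep_over (fun _ => True) s) &
      (forall b, A b -> in_kspan A0 b)].
End Alg.

(* Main.v *)
Require Import Defs.
From mathcomp Require Import all_boot all_order all_algebra.
From mathcomp Require Import mpoly.
From mathcomp Require Import ring.
From Stdlib Require Import Classical ClassicalEpsilon.
Set Implicit Arguments. Unset Strict Implicit. Unset Printing Implicit Defensive.
Import Order.TTheory GRing.Theory.
Local Open Scope ring_scope.

Section Span.
Variables (k : fieldType) (B : comAlgType k).

Definition spanv (F : k -> Prop) (V : B -> Prop) (b : B) :=
  exists l : seq (k * B), (forall p, p \in l -> F p.1 /\ V p.2) /\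
    b = \sum_(p <- l) p.1 *: p.2.

Definition mclosed (F : k -> Prop) := forall x y, F x -> F y -> F (x * y).

Lemma span0 F V : spanv F V 0.
Proof. by exists [::]; split => //; rewrite big_nil. Qed.

Lemma spanD F V a b : spanv F V a -> spanv F V b -> spanv F V (a + b).
Proof.
move=> [l1 [H1 ->]] [l2 [H2 ->]]; exists (l1 ++ l2); split; last by rewrite big_cat.
by move=> p; rewrite mem_cat => /orP [/H1|/H2].
Qed.

Lemma span_elem F V c x : F c -> V x -> spanv F V (c *: x).
Proof.
move=> Fc Vx; exists [:: (c, x)]; split; last by rewrite big_seq1.
by move=> p; rewrite inE => /eqP ->.
Qed.

Lemma spanZ F V c a : mclosed F -> F c -> spanv F V a -> spanv F V (c *: a).
Proof.
move=> mF Fc [l [H ->]]; exists [seq (c * p.1, p.2) | p <- l]; split.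
  move=> p /mapP [q /H [Fq Vq] ->] /=; split => //; exact: mF.
by rewrite big_map scaler_sumr; apply: eq_bigr => p _ /=; rewrite scalerA.
Qed.

Lemma span_trans F V W b : mclosed F -> (forall x, V x -> spanv F W x) ->
  spanv F V b -> spanv F W b.
Proof.
move=> mF HVW [l [H ->]]; elim: l H => [|p l IH] H; first by rewrite big_nil; exact: span0.
rewrite big_cons; apply: spanD.
  have [Fp Vp] := H p (mem_head _ _); apply: spanZ => //; exact: HVW.
by apply: IH => q ql; apply: H; rewrite inE ql orbT.
Qed.

Lemma span_mono F G V W b : (forall x, F x -> G x) -> (forall x, V x -> W x) ->
  spanv F V b -> spanv G W b.
Proof.
move=> FG VW [l [H ->]]; exists l; split => // p /H [? ?]; split; auto.
Qed.

Lemma span_mulr F V W a y : spanv F V a -> (forall x, V x -> W (x * y)) ->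
  spanv F W (a * y).
Proof.
move=> [l [H ->]] VW; exists [seq (p.1, p.2 * y) | p <- l]; split.
  by move=> p /mapP [q /H [? ?] ->] /=; split => //; exact: VW.
by rewrite big_map mulr_suml; apply: eq_bigr => p _; rewrite scalerAl.
Qed.

Lemma span_mul F V a b : mclosed F -> (forall x y, V x -> V y -> V (x * y)) ->
  spanv F V a -> spanv F V b -> spanv F V (a * b).
Proof.
move=> mF mV Ha Hb; rewrite mulrC.
apply: (span_trans mF (V := spanv F V)) => //.
apply: (span_mulr Hb) => x Vx.
case: Ha => [l' [H' ->]]; exists [seq (q.1, x * q.2) | q <- l']; split.
  by move=> q /mapP [q' /H' [? ?] ->]; split => //; exact: mV.
by rewrite big_map mulr_sumr; apply: eq_bigr => q _; rewrite scalerAr.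
Qed.

Lemma span_subalg F V : mclosed F -> V 1 -> (forall x y, V x -> V y -> V (x * y)) ->
  is_subalg_over F (spanv F V).
Proof.
move=> mF V1 mV; split.
- by move=> c Fc; exact: span_elem.
- by move=> x y; exact: spanD.
- by move=> x y; exact: span_mul.
Qed.

Lemma span_kspan V b : spanv (fun _ => True) V b -> in_kspan V b.
Proof.
move=> [l [H ->]]; exists (map fst l), (map snd l); split; first by rewrite !size_map.
split; first by move=> x /mapP [p /H [_ ?] ->].
rewrite size_map (big_nth (0, 0)) big_mkord; apply: eq_bigr => i _.
by rewrite !(nth_map (0, 0)).
Qed.

End Span.

Section LA.
Variables (k : fieldType) (K0 : k -> Prop) (HK : is_subfield K0).

Lemma K0_0 : K0 0. Proof. by case: HK. Qed.
Lemma K0_1 : K0 1. Proof. by case: HK. Qed.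
Lemma K0_B x y : K0 x -> K0 y -> K0 (x - y). Proof. by case: HK => _ _ H _ _; apply: H. Qed.
Lemma K0_M x y : K0 x -> K0 y -> K0 (x * y). Proof. by case: HK => _ _ _ H _; apply: H. Qed.
Lemma K0_V x : K0 x -> K0 x^-1. Proof. by case: HK => _ _ _ _ H; apply: H. Qed.
Lemma K0_N x : K0 x -> K0 (- x).
Proof. by move=> Kx; rewrite -sub0r; apply: K0_B => //; exact: K0_0. Qed.
Lemma K0_D x y : K0 x -> K0 y -> K0 (x + y).
Proof. by move=> Kx Ky; rewrite -[y]opprK; apply: K0_B => //; exact: K0_N. Qed.
Lemma K0_sum (I : Type) (r : seq I) (P : pred I) (f : I -> k) :
  (forall i, P i -> K0 (f i)) -> K0 (\sum_(i <- r | P i) f i).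
Proof. by move=> H; apply: big_ind => //; [exact: K0_0 | exact: K0_D]. Qed.

Lemma LA N : forall Eq : (nat -> k) -> Prop, (forall e, Eq e -> forall i, K0 (e i)) ->
  (forall c, (forall i, K0 (c i)) ->
     (forall e, Eq e -> \sum_(0 <= i < N) e i * c i = 0) -> forall i, (i < N)%N -> c i = 0) ->
  forall c, (forall e, Eq e -> \sum_(0 <= i < N) e i * c i = 0) ->
  forall i, (i < N)%N -> c i = 0.
Proof.
elim: N => [|N IH] Eq HEq Hprem c Hc i //.
have [[e0 [Ee0 a0]]|none] := classic (exists e0, Eq e0 /\ e0 N != 0); last first.
  exfalso.
  have H1 : (if N == N then 1 else 0) = (0:k).
    apply: (Hprem (fun i => if i == N then 1 else 0) _ _ N (ltnSn N)).
    - by move=> j; case: (j == N); [exact: K0_1 | exact: K0_0].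
    move=> e Ee; rewrite big_nat_recr //= eqxx mulr1 big1_seq ?add0r.
      by case: (eqVneq (e N) 0) => // ne; exfalso; apply: none; exists e.
    move=> j /andP [_]; rewrite mem_index_iota => /andP [_ jN].
    by rewrite (ltn_eqF jN) mulr0.
  by move: H1; rewrite eqxx => /eqP; rewrite oner_eq0.
set a := e0 N.
pose Eq' := fun e' => exists e, Eq e /\ e' = fun i => e i - e N / a * e0 i.
pose t (c : nat -> k) := \sum_(0 <= i < N) e0 i * c i.
have key : forall e (c : nat -> k), \sum_(0 <= i < N) (e i - e N / a * e0 i) * c i =
   \sum_(0 <= i < N) e i * c i - e N / a * t c.
  move=> e c'; rewrite /t mulr_sumr -sumrB; apply: eq_bigr => j _.
  by rewrite mulrBl mulrA.
have HEq' : forall e, Eq' e -> forall i, K0 (e i).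
  move=> _ [e [Ee ->]] j; apply: K0_B; first exact: HEq.
  apply: K0_M; last exact: HEq.
  apply: K0_M; first exact: HEq.
  by apply: K0_V; exact: HEq.
have Hprem' : forall c, (forall i, K0 (c i)) ->
     (forall e, Eq' e -> \sum_(0 <= i < N) e i * c i = 0) -> forall i, (i < N)%N -> c i = 0.
  move=> c' Kc' Hc' j jN.
  pose c'' := fun i => if i == N then - t c' / a else c' i.
  have eqs : forall f, \sum_(0 <= i < N) f i * c'' i = \sum_(0 <= i < N) f i * c' i.
    move=> f; apply: eq_big_nat => l /andP [_ lN]; by rewrite /c'' (ltn_eqF lN).
  have H1 : c'' j = 0.
    apply: (Hprem c'' _ _ j (leqW jN)).
    - move=> l; rewrite /c''; case: (l == N); last exact: Kc'.
      apply: K0_M; first by apply: K0_N; apply: K0_sum => l' _; apply: K0_M => //; exact: HEq.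
      by apply: K0_V; exact: HEq.
    move=> e Ee; rewrite big_nat_recr //= eqs /c'' eqxx.
    have := Hc' _ (ex_intro _ e (conj Ee erefl)); rewrite key => /eqP.
    rewrite subr_eq0 => /eqP ->; rewrite /t.
    by ring.
  by move: H1; rewrite /c'' (ltn_eqF jN).
have Hc' : forall e, Eq' e -> \sum_(0 <= i < N) e i * c i = 0.
  move=> _ [e [Ee ->]]; rewrite key.
  have h1 := Hc e Ee; have h0 := Hc e0 Ee0.
  rewrite big_nat_recr //= in h1; rewrite big_nat_recr //= in h0.
  have -> : t c = - (a * c N) by apply/eqP; rewrite -addr_eq0; apply/eqP.
  have -> : \sum_(0 <= i < N) e i * c i = - (e N * c N) by apply/eqP; rewrite -addr_eq0; apply/eqP.
  by rewrite mulrN opprK mulrA divfK // addNr.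
have cN : forall j, (j < N)%N -> c j = 0 := IH Eq' HEq' Hprem' c Hc'.
rewrite ltnS leq_eqVlt => /orP [/eqP ->|]; last exact: cN.
have h0 := Hc e0 Ee0; rewrite big_nat_recr //= big1_seq ?add0r in h0.
  by move/eqP: h0; rewrite mulf_eq0 (negPf a0) => /eqP.
by move=> j; rewrite mem_index_iota => /andP [_ /cN ->]; rewrite mulr0.
Qed.
End LA.

Lemma choice_fun (A B : Type) (R : A -> B -> Prop) :
  (forall a, exists b, R a b) -> exists f : A -> B, forall a, R a (f a).
Proof.
move=> H; exists (fun a => proj1_sig (constructive_indefinite_description _ (H a))).
by move=> a; exact: proj2_sig.
Qed.

Lemma nat_subseq (g : nat -> nat) : exists psi : nat -> nat,
  (forall k, psi k < psi k.+1)%N /\ (forall k, g (psi k) <= g (psi k.+1))%N.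
Proof.
have mn_ex : forall a, exists j, (a < j)%N /\ forall j', (a < j')%N -> (g j <= g j')%N.
  move=> a.
  suff: forall b j0, (a < j0)%N -> (g j0 <= b)%N ->
      exists j, (a < j)%N /\ forall j', (a < j')%N -> (g j <= g j')%N.
    by move=> /(_ (g a.+1) a.+1 (ltnSn a) (leqnn _)).
  elim => [|b IH] j0 aj0 gj0.
    exists j0; split => // j' _; move: gj0; rewrite leqn0 => /eqP ->; exact: leq0n.
  have [[j' [aj' lt']]|none] := classic (exists j', (a < j')%N /\ (g j' < g j0)%N).
    apply: (IH j') => //; rewrite -ltnS; exact: leq_trans lt' gj0.
  exists j0; split => // j' aj'; rewrite leqNgt; apply/negP => lt'.
  by apply: none; exists j'.
have [mn Hmn] := choice_fun mn_ex.
exists (fun k => iter k.+1 mn 0); split => kk.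
  by rewrite [X in (_ < X)%N]iterS; case: (Hmn (iter kk.+1 mn 0)).
rewrite iterS; case: (Hmn (iter kk mn 0)) => h1 h2; apply: h2.
rewrite [X in (_ < X)%N]iterS; apply: (ltn_trans h1).
by case: (Hmn (mn (iter kk mn 0))).
Qed.

Lemma dickson_seq n (u : nat -> 'X_{1..n}) : exists i j, (i < j)%N /\ (u i <= u j)%MM.
Proof.
have Q : forall c, exists phi : nat -> nat, {homo phi : i j / (i < j)%N} /\
    forall c' : 'I_n, (c' < c)%N -> forall i j, (i <= j)%N -> (u (phi i) c' <= u (phi j) c')%N.
  elim => [|c [phi [Hphi Hc]]]; first by exists id; split.
  case: (ltnP c n) => cn; last first.
    exists phi; split => // c' _; apply: Hc; exact: leq_trans (ltn_ord c') cn.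
  pose ci := Ordinal cn.
  have [psi [Hpsi Hg]] := nat_subseq (fun k => u (phi k) ci).
  have psiM : {homo psi : i j / (i <= j)%N}.
    by apply: homo_leq => //; [exact: leq_trans | move=> i; exact: ltnW].
  exists (phi \o psi); split.
    move=> i j ij /=; apply: Hphi; exact: (homo_ltn ltn_trans Hpsi ij).
  move=> c'; rewrite ltnS leq_eqVlt => /orP [/eqP c'c|c'c] i j ij /=.
    have -> : c' = ci by apply: val_inj.
    apply: (homo_leq (f := fun k => u (phi (psi k)) ci) (r := leq)) => //.
    exact: leq_trans.
  by apply: Hc => //; exact: psiM.
have [phi [Hphi Hc]] := Q n.
exists (phi 0), (phi 1); split; first exact: Hphi.
by apply/mnm_lepP => c'; apply: Hc.
Qed.

Fixpoint histf (T : Type) (f : seq T -> T) (kk : nat) : seq T :=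
  if kk is k'.+1 then rcons (histf f k') (f (histf f k')) else [::].

Lemma dickson n (P : 'X_{1..n} -> Prop) : (forall m d, P m -> P (m + d)%MM) ->
  exists G : seq 'X_{1..n}, (forall g, g \in G -> P g) /\
    (forall m, P m -> exists2 g, g \in G & (g <= m)%MM).
Proof.
move=> Pup; apply: NNPP => hn.
have H : forall G : seq 'X_{1..n}, exists m, (forall g, g \in G -> P g) ->
    P m /\ forall g, g \in G -> ~~ (g <= m)%MM.
  move=> G; have [HG|HG] := classic (forall g, g \in G -> P g); last first.
    by exists 0%MM.
  apply: NNPP => hm; apply: hn; exists G; split => // m Pm.
  apply: NNPP => hg; apply: hm; exists m => _; split => // g gG.
  by apply/negP => le; apply: hg; exists g.
have [nxt Hnxt] := choice_fun H.
have allP : forall kk g, g \in histf nxt kk -> P g.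
  elim => [|kk IH] g //=; rewrite mem_rcons inE => /orP [/eqP ->|]; last exact: IH.
  by case: (Hnxt (histf nxt kk) IH).
have memh : forall i j, (i < j)%N -> nxt (histf nxt i) \in histf nxt j.
  move=> i; elim => [|j IH] //; rewrite ltnS leq_eqVlt => /orP [/eqP ->|ij] /=;
    rewrite mem_rcons inE; first by rewrite eqxx.
  by rewrite IH ?orbT.
have [i [j [ij le]]] := dickson_seq (fun kk => nxt (histf nxt kk)).
case: (Hnxt (histf nxt j) (allP j)) => _ /(_ _ (memh i j ij)).
by rewrite le.
Qed.

Section Mono.
Variables (k : fieldType) (B : comAlgType k) (gens : seq B).
Local Notation n := (size gens).
Local Notation X := 'X_{1..size gens}.

Definition mon (m : X) : B := \prod_(i < n) gens`_i ^+ m i.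
Definition MonS (S : X -> Prop) (b : B) := exists m, S m /\ b = mon m.
Definition std (m : X) := ~ spanv (fun _ => True) (MonS (fun m' => (m' < m)%O)) (mon m).

Lemma mon0 : mon 0%MM = 1.
Proof. by rewrite /mon big1 // => i _; rewrite mnm0E expr0. Qed.

Lemma monD m1 m2 : mon (m1 + m2)%MM = mon m1 * mon m2.
Proof.
by rewrite /mon -big_split; apply: eq_bigr => i _; rewrite mnmDE exprD.
Qed.

Lemma monU (i : 'I_n) : mon U_(i)%MM = gens`_i.
Proof.
rewrite /mon (bigD1 i) //= mnm1E eqxx expr1 big1 ?mulr1 // => j ji.
by rewrite mnm1E eq_sym (negPf ji) expr0.
Qed.

Lemma MonT1 : MonS (fun _ => True) 1.
Proof. by exists 0%MM; rewrite mon0. Qed.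

Lemma MonTM x y : MonS (fun _ => True) x -> MonS (fun _ => True) y ->
  MonS (fun _ => True) (x * y).
Proof. by move=> [m1 [_ ->]] [m2 [_ ->]]; exists (m1 + m2)%MM; rewrite monD. Qed.

Lemma mclosedT : mclosed (fun _ : k => True). Proof. by []. Qed.

Lemma std_red m : spanv (fun _ => True) (MonS (fun m' => std m' /\ (m' <= m)%O)) (mon m).
Proof.
elim/(@ltmwf (size gens)): m => m IH.
have [sm|sm] := classic (std m).
  by rewrite -[mon m]scale1r; apply: span_elem => //; exists m; split.
have := NNPP _ sm; apply: span_trans => // x [m' [lt ->]].
apply: span_mono (IH m' lt) => // y [m'' [[s le] ->]]; exists m''; split => //.
by split => //; exact: le_trans le (ltW lt).
Qed.

Lemma nstd_up m d : ~ std m -> ~ std (m + d)%MM.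
Proof.
move=> /NNPP h hs; apply: hs; rewrite monD.
apply: (span_mulr h) => x [m' [lt ->]]; exists (m' + d)%MM; split.
  by rewrite ltmc_add2l.
by rewrite monD.
Qed.

Lemma nstd_rep g : ~ std g ->
  spanv (fun _ => True) (MonS (fun m' => std m' /\ (m' < g)%O)) (mon g).
Proof.
move=> /NNPP h; apply: span_trans h => // x [m' [lt ->]].
apply: span_mono (std_red m') => // y [m'' [[s le] ->]]; exists m''; split => //.
by split => //; exact: le_lt_trans le lt.
Qed.

Definition mval (l : seq (k * X)) := \sum_(p <- l) p.1 *: mon p.2.
Definition mcf (l : seq (k * X)) m := \sum_(p <- l | p.2 == m) p.1.

Lemma span_to_m F S b : spanv F (MonS S) b ->
  exists lm, (forall p, p \in lm -> F p.1 /\ S p.2) /\ b = mval lm.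
Proof.
move=> [l [H ->]]; elim: l H => [|p l IH] H.
  by exists [::]; split => //; rewrite /mval !big_nil.
have [lm [Hlm E]] := IH (fun q ql => H q (@mem_behead _ (p :: l) _ ql)).
have [Fp [m [Sm pm]]] := H p (mem_head _ _).
exists ((p.1, m) :: lm); split.
  by move=> q; rewrite inE => /orP [/eqP ->|/Hlm].
by rewrite big_cons E /mval big_cons pm.
Qed.

Lemma m_to_span F S lm : (forall p, p \in lm -> F p.1 /\ S p.2) ->
  spanv F (MonS S) (mval lm).
Proof.
move=> H; exists [seq (p.1, mon p.2) | p <- lm]; split.
  by move=> q /mapP [p /H [? ?] ->]; split => //; exists p.2.
by rewrite big_map.
Qed.

Lemma mval_split (l : seq (k * X)) (m : X) : mval l = mcf l m *: mon m + mval [seq p <- l | p.2 != m].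
Proof.
rewrite /mval (bigID (fun p => p.2 == m)) /= big_filter /mcf scaler_suml; congr (_ + _).
by apply: eq_bigr => p /eqP ->.
Qed.

Lemma mcf_filter (l : seq (k * X)) (m m' : X) :
  mcf [seq p <- l | p.2 != m] m' = if m' == m then 0 else mcf l m'.
Proof.
rewrite /mcf big_filter_cond; case: eqP => [->|ne].
  by rewrite big_pred0 // => p; case: (p.2 == m).
apply: eq_bigl => p; case: (eqVneq p.2 m') => [->|_]; last by rewrite andbF.
by rewrite andbT; apply/eqP => e; apply: ne.
Qed.

Lemma size_filt (l : seq (k * X)) (m : X) : m \in map snd l -> (size [seq p <- l | p.2 != m] < size l)%N.
Proof.
move=> /mapP [p pl ->]; rewrite size_filter.
rewrite -(count_predC (fun q : k * X => q.2 != p.2) l) -[X in (X < _)%N]addn0 ltn_add2l -has_count.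
by apply/hasP; exists p => //=; rewrite eqxx.
Qed.

Lemma mval0 (l : seq (k * X)) : (forall m, mcf l m = 0) -> mval l = 0.
Proof.
move: {2}(size l) (leqnn (size l)) => N; elim: N l => [|N IH] [|p l] //=;
  try by rewrite /mval big_nil.
move=> sl H; rewrite (mval_split _ p.2) H scale0r add0r; apply: IH.
  rewrite -ltnS; apply: leq_trans sl; apply: size_filt; exact: mem_head.
by move=> m'; rewrite mcf_filter H; case: eqP.
Qed.

Lemma seq_max (s : seq X) : s != [::] ->
  exists2 M, M \in s & forall x, x \in s -> (x <= M)%O.
Proof.
elim: s => [|a s IH] // _; case: s IH => [|b s] IH.
  by exists a; rewrite ?mem_head // => x; rewrite inE => /eqP ->.
have [M Ms HM] := IH isT; case: (leP a M) => aM.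
  exists M; first by rewrite inE Ms orbT.
  by move=> x; rewrite inE => /orP [/eqP ->|/HM].
exists a; first exact: mem_head.
move=> x; rewrite inE => /orP [/eqP ->//|/HM xM]; exact: le_trans xM (ltW aM).
Qed.

Lemma std_indep (l : seq (k * X)) : (forall p, p \in l -> std p.2) -> mval l = 0 ->
  forall m, mcf l m = 0.
Proof.
move: {2}(size l) (leqnn (size l)) => N; elim: N l => [|N IH] l sl Hs H0 m.
  by case: l sl {Hs H0} => // _; rewrite /mcf big_nil.
case: l sl Hs H0 => [|p0 l0] sl Hs H0; first by rewrite /mcf big_nil.
set l := p0 :: l0 in sl Hs H0 *.
have [M Ml HM] := seq_max (s := map snd l) isT.
have cM : mcf l M = 0.
  apply: NNPP => cM; have := Hs.
  have [q ql qM] := mapP Ml.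
  move=> /(_ q ql); rewrite -qM; apply.
  have -> : mon M = - (mcf l M)^-1 *: mval [seq p <- l | p.2 != M].
    have cM' : mcf l M != 0 by apply/eqP.
    move: H0; rewrite (mval_split _ M) => /eqP; rewrite addr_eq0 => /eqP E.
    by rewrite -[mon M]scale1r -(mulVf cM') -scalerA E scalerN scaleNr.
  apply: spanZ => //; apply: m_to_span => p; rewrite mem_filter => /andP [pM pl].
  split => //; rewrite lt_neqAle pM HM //; exact: map_f.
have Hf := IH [seq p <- l | p.2 != M].
have := Hf _ _ _ m; rewrite mcf_filter; case: eqP => [->|_]; first by rewrite cM.
apply.
- by rewrite -ltnS; apply: leq_trans sl; exact: size_filt.
- by move=> p; rewrite mem_filter => /andP [_ /Hs].
- by move: H0; rewrite (mval_split _ M) cM scale0r add0r.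
Qed.

End Mono.
Arguments MonS {k B} gens S b.
Arguments std {k B} gens m.
Arguments mon {k B} gens m.
Arguments mval {k B} gens l.
Arguments mcf {k B} gens l m.

Lemma indep_lift (k : fieldType) (B : comAlgType k) (gens : seq B) (K0 : k -> Prop)
  (HK : is_subfield K0) (s : seq B) :
  (forall x, x \in s -> spanv K0 (MonS gens (std gens)) x) ->
  lin_indep_over K0 s -> lin_indep_over (fun _ => True) s.
Proof.
move=> Hs Hind c sc _ sum0 i.
set N := size s.
have HL0 : forall j, exists lm, (forall p, p \in lm -> K0 p.1 /\ std gens p.2) /\
    s`_j = mval gens lm.
  move=> j; case: (ltnP j N) => jN.
    exact: span_to_m (Hs _ (mem_nth 0 jN)).
  by exists [::]; rewrite nth_default // /mval big_nil.
have [L HL] := choice_fun HL0.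
pose comb (c' : nat -> k) :=
  flatten [seq [seq (c' j * p.1, p.2) | p <- L j] | j <- index_iota 0 N].
have Hval : forall c', mval gens (comb c') = \sum_(0 <= j < N) c' j *: s`_j.
  move=> c'; rewrite /mval big_flatten /= big_map; apply: eq_bigr => j _.
  rewrite big_map (proj2 (HL j)) /mval scaler_sumr; apply: eq_bigr => p _ /=.
  by rewrite scalerA.
have Hcf : forall c' m, mcf gens (comb c') m = \sum_(0 <= j < N) mcf gens (L j) m * c' j.
  move=> c' m; rewrite /mcf big_flatten /= big_map; apply: eq_bigr => j _.
  by rewrite big_map mulr_suml; apply: eq_bigr => p _ /=; rewrite mulrC.
have Hstd : forall c' p, p \in comb c' -> std gens p.2.
  move=> c' p /flattenP [l' /mapP [j _ ->] /mapP [q qL ->]] /=.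
  exact: (proj1 (HL j) q qL).2.
pose Eq := fun e : nat -> k => exists m, e = fun j => mcf gens (L j) m.
case: (ltnP i N) => iN; last by rewrite nth_default // sc.
apply: (@LA _ K0 HK N Eq _ _ (fun j => c`_j)) => //.
- move=> _ [m ->] j; rewrite /mcf big_seq_cond; apply: (K0_sum HK) => p /andP [pL _].
  exact: (proj1 (HL j) p pL).1.
- move=> c' Kc' Hc' j jN.
  have H0 : mval gens (comb c') = 0.
    by apply: mval0 => m; rewrite Hcf; apply: Hc'; exists m.
  rewrite Hval in H0.
  have H1 : (mkseq c' N)`_j = 0.
    apply: Hind; first by rewrite size_mkseq.
      by move=> x /mapP [j' _ ->]; exact: Kc'.
    apply: etrans H0; rewrite big_mkord; apply: eq_bigr => j' _.
    by rewrite nth_mkseq.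
  by rewrite nth_mkseq in H1.
- move=> _ [m ->]; rewrite -Hcf; apply: (std_indep (Hstd _)).
  by rewrite Hval big_mkord.
Qed.

Section Form.
Variables (k : fieldType) (B : comAlgType k) (gens : seq B) (K0 : k -> Prop).
Variable (HK : is_subfield K0).
Variable (G : seq 'X_{1..size gens}) (Lg : 'X_{1..size gens} -> seq (k * B)).
Variable (HG : forall m, ~ std gens m -> exists2 g, g \in G & (g <= m)%MM).
Variable (HLg : forall g, g \in G ->
  (forall p, p \in Lg g -> K0 p.1 /\ MonS gens (fun m' => std gens m' /\ (m' < g)%O) p.2) /\
  mon gens g = \sum_(p <- Lg g) p.1 *: p.2).

Lemma all_std_K0 m : spanv K0 (MonS gens (std gens)) (mon gens m).
Proof.
elim/(@ltmwf (size gens)): m => m IH.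
have [sm|sm] := classic (std gens m).
  rewrite -[mon gens m]scale1r; apply: span_elem; first exact: K0_1 HK.
  by exists m.
have [g gG le] := HG sm.
rewrite -(submK le) addmC monD.
have Hg : spanv K0 (MonS gens (fun m' => std gens m' /\ (m' < g)%O)) (mon gens g).
  by exists (Lg g); case: (HLg gG).
apply: (span_trans (K0_M HK) (V := spanv K0 (MonS gens (std gens)))) => //.
apply: (span_mulr Hg) => x [m' [[_ lt] ->]]; rewrite -monD; apply: IH.
apply: (lt_le_trans (y := (g + (m - g))%MM)); first by rewrite ltmc_add2l.
by rewrite addmC (submK le).
Qed.

Lemma span_K0_std b : spanv K0 (MonS gens (fun _ => True)) b ->
  spanv K0 (MonS gens (std gens)) b.
Proof.
apply: span_trans; first exact: K0_M HK.
by move=> x [m [_ ->]]; exact: all_std_K0.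
Qed.
End Form.

Lemma iter_addD (k : fieldType) (B : comAlgType k) (D : B -> B) :
  (forall a b, D (a + b) = D a + D b) -> forall n a b, iter n D (a + b) = iter n D a + iter n D b.
Proof. by move=> HD; elim => [|n IH] a b //=; rewrite IH HD. Qed.

Lemma iter_addZ (k : fieldType) (B : comAlgType k) (D : B -> B) :
  (forall c a, D (c *: a) = c *: D a) -> forall n c a, iter n D (c *: a) = c *: iter n D a.
Proof. by move=> HD; elim => [|n IH] c a //=; rewrite IH HD. Qed.

Lemma iter_add0 (k : fieldType) (B : comAlgType k) (D : B -> B) :
  D 0 = 0 -> forall n, iter n D 0 = 0.
Proof. by move=> HD; elim => [|n IH] //=; rewrite IH HD. Qed.

Theorem lemma1p2 (k : closedFieldType) (B : comAlgType k)
  (R : B -> Prop) (D : B -> B) :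
  [pchar k] =i pred0 ->
  (* Y = Spec B : irreducible affine k-variety *)
  fg_subalg_over (fun _ : k => True) (fun _ : B => True) ->
  is_domain B ->
  (* T = Spec R, R a k-subalgebra of B (f dominant <=> f^* injective) *)
  fg_subalg_over (fun _ : k => True) R ->
  (* general fibers irreducible and reduced *)
  (exists g, R g /\ g <> 0 /\
     forall m, is_max_ideal_of R m -> ~ m g -> is_prime_ideal (ext_ideal m)) ->
  (* D an R-trivial derivation of B *)
  is_derivation D -> (forall r, R r -> D r = 0) ->
  (* D (x)_R R/m locally nilpotent for every closed point of T *)
  (forall m, is_max_ideal_of R m -> loc_nilp_mod m D) ->
  exists (K0 : k -> Prop) (B0 R0 : B -> Prop),
    [/\ fg_field_over_Q K0,
        fg_subalg_over K0 B0 /\ fg_subalg_over K0 R0,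
        (forall x, R0 x -> B0 x),
        is_form_of K0 B0 (fun _ : B => True) /\ is_form_of K0 R0 R &
        (forall x, B0 x -> B0 (D x)) /\
        (loc_nilp_on B0 D <-> loc_nilp_on (fun _ : B => True) D)].
Proof.
move=> _ [_ [gens [_ Hmin]]] _ [[HR1 HR2 HR3] [rgens [Hrg HRmin]]] _ Hder HDR _.
have genmon : forall y, y \in gens -> exists m, y = mon gens m.
  move=> y yg; have ix : (index y gens < size gens)%N by rewrite index_mem.
  by exists U_(Ordinal ix)%MM; rewrite monU /= nth_index.
have spanAll : forall b, spanv (fun _ => True) (MonS gens (fun _ => True)) b.
  move=> b; apply: (Hmin (spanv (fun _ => True) (MonS gens (fun _ => True)))) => //.
    by apply: span_subalg; [exact: mclosedT | exact: MonT1 | exact: MonTM].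
  move=> y /genmon [m ->]; rewrite -[mon gens m]scale1r; apply: span_elem => //.
  by exists m.
have [G [HGP HG]] := dickson (fun m d => @nstd_up _ _ gens m d).
have HLg0 : forall g : 'X_{1..size gens}, exists l : seq (k * B), ~ std gens g ->
    (forall p, p \in l -> MonS gens (fun m' => std gens m' /\ (m' < g)%O) p.2) /\
    mon gens g = \sum_(p <- l) p.1 *: p.2.
  move=> g; case: (classic (std gens g)) => sg; first by exists [::].
  have [l [Hl E]] := nstd_rep sg; exists l => _; split => // p pl; exact: (Hl p pl).2.
have [Lg HLg] := choice_fun HLg0.
have HLb0 : forall b : B, exists l : seq (k * B),
    (forall p, p \in l -> MonS gens (fun _ => True) p.2) /\ b = \sum_(p <- l) p.1 *: p.2.
  by move=> b; have [l [Hl E]] := spanAll b; exists l; split => // p pl; exact: (Hl p pl).2.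
have [Lb HLb] := choice_fun HLb0.
pose cs := flatten [seq map fst (Lg g) | g <- G] ++
           flatten [seq map fst (Lb b) | b <- map D gens ++ rgens].
pose K0 := fun x : k => forall F, is_subfield F -> {in cs, forall y, F y} -> F x.
have HK : is_subfield K0.
  split.
  - by move=> F [].
  - by move=> F [].
  - move=> x y Kx Ky F HF Hcs; case: (HF) => _ _ H _ _; apply: H; [exact: Kx | exact: Ky].
  - move=> x y Kx Ky F HF Hcs; case: (HF) => _ _ _ H _; apply: H; [exact: Kx | exact: Ky].
  - move=> x Kx F HF Hcs; case: (HF) => _ _ _ _ H; apply: H; exact: Kx.
have csK : forall y, y \in cs -> K0 y by move=> y ycs F HF Hcs; apply: Hcs.
have KLg : forall g, g \in G -> forall p, p \in Lg g -> K0 p.1.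
  move=> g gG p pl; apply: csK; rewrite mem_cat; apply/orP; left.
  apply/flattenP; exists (map fst (Lg g)); last exact: map_f.
  by apply/mapP; exists g.
have KLb : forall b, b \in map D gens ++ rgens -> forall p, p \in Lb b -> K0 p.1.
  move=> b bG p pl; apply: csK; rewrite mem_cat; apply/orP; right.
  apply/flattenP; exists (map fst (Lb b)); last exact: map_f.
  by apply/mapP; exists b.
have HLg' : forall g, g \in G ->
    (forall p, p \in Lg g -> K0 p.1 /\ MonS gens (fun m' => std gens m' /\ (m' < g)%O) p.2) /\
    mon gens g = \sum_(p <- Lg g) p.1 *: p.2.
  move=> g gG; have [H1 H2] := HLg g (HGP g gG); split => // p pl; split.
    exact: KLg gG p pl.
  exact: H1.
have stdK := span_K0_std HK HG HLg'.
pose B0 := fun x : B => forall C, is_subalg_over K0 C -> {in gens, forall y, C y} -> C x.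
pose R0 := fun x : B => forall C, is_subalg_over K0 C -> {in rgens, forall y, C y} -> C x.
have B0sub : is_subalg_over K0 B0.
  split.
  - by move=> c Kc C [H _ _] _; exact: H.
  - by move=> x y Bx By C HC Hg; case: (HC) => _ H _; apply: H; [exact: Bx | exact: By].
  - by move=> x y Bx By C HC Hg; case: (HC) => _ _ H; apply: H; [exact: Bx | exact: By].
have R0sub : is_subalg_over K0 R0.
  split.
  - by move=> c Kc C [H _ _] _; exact: H.
  - by move=> x y Bx By C HC Hg; case: (HC) => _ H _; apply: H; [exact: Bx | exact: By].
  - by move=> x y Bx By C HC Hg; case: (HC) => _ _ H; apply: H; [exact: Bx | exact: By].
have K0_0' : K0 0 by case: HK.
have K0_1' : K0 1 by case: HK.
have B0_0 : B0 0 by rewrite -(scale0r 1); case: B0sub => H _ _; exact: H.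
have B0_1 : B0 1 by rewrite -(scale1r 1); case: B0sub => H _ _; exact: H.
have B0D : forall x y, B0 x -> B0 y -> B0 (x + y) by case: B0sub.
have B0M : forall x y, B0 x -> B0 y -> B0 (x * y) by case: B0sub.
have B0A : forall c, K0 c -> B0 (c%:A) by case: B0sub.
have B0gens : {in gens, forall y, B0 y} by move=> y yg C _ H; exact: H.
have B0mon : forall m, B0 (mon gens m).
  move=> m; rewrite /mon; apply: big_ind => // i _.
  elim: (m i) => [|e IH]; first by rewrite expr0.
  by rewrite exprS; apply: B0M => //; apply: B0gens; exact: mem_nth.
have B0span : forall b, spanv K0 (MonS gens (fun _ => True)) b -> B0 b.
  move=> b [l [Hl ->]]; rewrite big_seq; apply: big_ind => // p /Hl [Kp [m [_ ->]]].
  by rewrite -mulr_algl; apply: B0M; [exact: B0A | exact: B0mon].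
have B0std : forall x, B0 x -> spanv K0 (MonS gens (std gens)) x.
  move=> x Bx; apply: stdK; apply: Bx.
    apply: span_subalg; [exact: (K0_M HK) | exact: MonT1 | exact: MonTM].
  move=> y /genmon [m ->]; rewrite -[mon gens m]scale1r; apply: span_elem => //.
  by exists m.
have Lb_B0 : forall b, b \in map D gens ++ rgens -> B0 b.
  move=> b bin; have [Hl E] := HLb b; rewrite E; apply: B0span.
  exists (Lb b); split => // p pl; split; [exact: KLb bin p pl | exact: Hl].
have R0B0 : forall x, R0 x -> B0 x.
  move=> x Rx; apply: Rx => // y yr; apply: Lb_B0; by rewrite mem_cat yr orbT.
have DA : forall c, D (c%:A) = 0 by move=> c; apply: HDR; exact: HR1.
have Dlin : forall c x, D (c *: x) = c *: D x.
  by move=> c x; rewrite -mulr_algl; have [_ ->] := Hder (c%:A) x; rewrite DA mul0r addr0 mulr_algl.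
have Dadd : forall a b, D (a + b) = D a + D b by move=> a b; case: (Hder a b).
have D0 : D 0 = 0.
  by apply: (@addrI _ (D 0)); rewrite -Dadd !addr0.
have DB0 : forall x, B0 x -> B0 (D x).
  suff: forall x, B0 x -> B0 x /\ B0 (D x) by move=> H x /H [].
  move=> x Bx; apply: (Bx (fun z => B0 z /\ B0 (D z))).
  - split.
    + by move=> c Kc; split; [exact: B0A | rewrite DA].
    + move=> a b [Ba BDa] [Bb BDb]; split; first exact: B0D.
      by rewrite Dadd; exact: B0D.
    + move=> a b [Ba BDa] [Bb BDb]; split; first exact: B0M.
      have [_ ->] := Hder a b; apply: B0D; exact: B0M.
  - move=> y yg; split; first exact: B0gens.
    by apply: Lb_B0; rewrite mem_cat map_f.
have B0spanAll : forall b, spanv (fun _ => True) B0 b.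
  move=> b; apply: span_trans (spanAll b) => // x [m [_ ->]].
  by rewrite -[mon gens m]scale1r; apply: span_elem.
have R0_1 : R0 1 by rewrite -(scale1r 1); case: R0sub => H _ _; exact: H.
have R0spanR : forall b, R b -> spanv (fun _ => True) R0 b.
  move=> b; apply: HRmin.
    apply: span_subalg => //; case: R0sub => _ _ H; exact: H.
  move=> y yr; rewrite -[y]scale1r; apply: span_elem => //.
  by move=> C _ H; exact: H y yr.
have RK0 : is_subalg_over K0 R.
  by split => // c _; exact: HR1.
exists K0, B0, R0; split.
- split => //; exists cs; split => //.
  by move=> F HF Hcs x Kx; exact: Kx F HF Hcs.
- split; split => //.
    by exists gens; split => // C HC Hg x Bx; exact: Bx C HC Hg.
  by exists rgens; split => [y yr C _ H|C HC Hg x Bx]; [exact: H | exact: Bx C HC Hg].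
- exact: R0B0.
- split; split.
  + by [].
  + move=> s Hs; apply: (indep_lift HK) => x xs; apply: B0std; exact: Hs.
  + by move=> b _; apply: span_kspan; exact: B0spanAll.
  + by move=> x R0x; apply: R0x.
  + move=> s Hs; apply: (indep_lift HK) => x xs; apply: B0std; apply: R0B0; exact: Hs.
  + by move=> b Rb; apply: span_kspan; exact: R0spanR.
- split; first exact: DB0.
  split; last by move=> H a _; exact: H.
  move=> Hn a _; have [l [Hl ->]] := B0spanAll a.
  elim: l Hl => [|p l IH] Hl; first by exists 0; rewrite big_nil.
  have [n1 H1] := IH (fun q ql => Hl q (@mem_behead _ (p :: l) _ ql)).
  have [n2 H2] := Hn p.2 (proj2 (Hl p (mem_head _ _))).
  exists (n1 + n2)%N; rewrite big_cons (iter_addD Dadd) (iter_addZ Dlin).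
  have -> : iter (n1 + n2)%N D p.2 = 0 by rewrite iterD H2 iter_add0.
  have -> : iter (n1 + n2)%N D (\sum_(j <- l) j.1 *: j.2) = 0.
    by rewrite addnC iterD H1 iter_add0.
  by rewrite scaler0 add0r.
Qed.
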